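(* Fix $x_{\rm A}>0$. For $0<x_{\rm B}<x_{\rm A}$ let $T_D^R(v_{\rm A};x_{\rm B})$ be the direct rectilinear elapsed-time function. Then $$\frac{\partial^2T_D^R}{\partial v_{\rm A}^2}(0;x_{\rm B})\longrightarrow+\infty\qquad\text{as }x_{\rm B}\to x_{\rm A}^-.$$
   Context: Kepler problem on a line normalized as $\ddot x=-1/x^2$ ($x>0$). For $v_{\rm A}<\sqrt{2/x_{\rm A}}$, $T_D^R(v_{\rm A};x_{\rm B})$ is the first time after $t_{\rm A}$ (minus $t_{\rm A}$) at which the solution with $x(t_{\rm A})=x_{\rm A}$, $\dot x(t_{\rm A})=v_{\rm A}$ reaches $x_{\rm B}$ (without collision with $0$; after culmination if $v_{\rm A}\ge0$). It is a smooth function of $v_{\rm A}$. *)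

(* Defs.v *)
From Stdlib Require Import Reals Lra ClassicalEpsilon.
Open Scope R_scope.

(* Direct rectilinear Kepler problem  x'' = -1/x^2,  x > 0, with t_A normalised
   to 0 (autonomous equation).  [IsHitTime xA vA xB T] says: T > 0 and there is
   a solution (x, v = x') on [0,T] with x(0)=xA, x'(0)=vA, staying in x>0
   (no collision), with x(T)=xB and x(t) <> xB for 0 <= t < T, i.e. T is the
   first time after t_A at which the motion reaches xB. *)
Definition IsHitTime (xA vA xB T : R) : Prop :=
  0 < T /\
  exists x v : R -> R,
    x 0 = xA /\ v 0 = vA /\ x T = xB /\
    (forall t, 0 <= t <= T ->
        0 < x t /\
        derivable_pt_lim x t (v t) /\
        derivable_pt_lim v t (- / (x t ^ 2))) /\
    (forall t, 0 <= t < T -> x t <> xB).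

(* T_D^R(vA; xB) (for fixed xA): the (unique, by uniqueness of ODE solutions)
   first hitting time, selected by Hilbert's epsilon. *)
Definition TDR (xA xB vA : R) : R :=
  epsilon (inhabits 0) (fun T => IsHitTime xA vA xB T).

(* Main.v *)
Require Import Defs.
From Stdlib Require Import Reals Lra ClassicalEpsilon Ranalysis5.
From Coquelicot Require Import Coquelicot.
Open Scope R_scope.

Definition Q (k v : R) := 2*atan(v/sqrt k) + 2*v*sqrt k/(k+v^2).
Definition dQ (k v : R) := 4*k*sqrt k/(k+v^2)^2.

Lemma Q_deriv k v : 0 < k -> derivable_pt_lim (Q k) v (dQ k v).
Proof.
  intros Hk. apply is_derive_Reals. unfold Q, dQ.
  assert (Hs : 0 < sqrt k) by (apply sqrt_lt_R0; lra).
  assert (Hkv : 0 < k + v^2) by nra.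
  auto_derive.
  - nra.
  - set (sk := sqrt k) in *.
    assert (E : k = sk*sk) by (unfold sk; rewrite sqrt_sqrt; lra).
    rewrite E. field. repeat split; try lra.
Qed.

Lemma dQ_pos k v : 0 < k -> 0 < dQ k v.
Proof.
  intros Hk. unfold dQ. assert (0 < sqrt k) by (apply sqrt_lt_R0; lra).
  assert (0 < k + v^2) by nra. apply Rdiv_lt_0_compat; [nra|]. apply pow_lt; lra.
Qed.

Lemma Q_incr k x y : 0 < k -> x < y -> Q k x < Q k y.
Proof.
  intros Hk Hxy.
  destruct (MVT_cor2 (Q k) (dQ k) x y Hxy) as [c [Hc _]].
  { intros c _. apply Q_deriv; auto. }
  assert (0 < dQ k c) by (apply dQ_pos; auto). nra.
Qed.

Lemma Q_cont k v : 0 < k -> continuity_pt (Q k) v.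
Proof.
  intros Hk. apply derivable_continuous_pt. exists (dQ k v). apply Q_deriv; auto.
Qed.

Lemma Q_odd k v : Q k (- v) = - Q k v.
Proof.
  unfold Q. replace (- v / sqrt k) with (- (v / sqrt k)) by (unfold Rdiv; ring).
  rewrite atan_opp. replace ((-v)^2) with (v^2) by ring. unfold Rdiv. ring.
Qed.

Definition Qinv k lb ub y := epsilon (inhabits 0) (fun w => lb <= w <= ub /\ Q k w = y).

Lemma Qinv_spec k lb ub y : 0 < k -> lb < ub -> Q k lb <= y <= Q k ub ->
  lb <= Qinv k lb ub y <= ub /\ Q k (Qinv k lb ub y) = y.
Proof.
  intros Hk Hlu Hy. unfold Qinv. apply epsilon_spec.
  destruct (f_interv_is_interv (Q k) lb ub y Hlu Hy) as [w Hw].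
  { intros; apply Q_cont; auto. }
  exists w; exact Hw.
Qed.

Lemma Q_inj k x y : 0 < k -> Q k x = Q k y -> x = y.
Proof.
  intros Hk H. destruct (Rtotal_order x y) as [h|[h|h]]; auto.
  - pose proof (Q_incr k x y Hk h); lra.
  - pose proof (Q_incr k y x Hk h); lra.
Qed.

Lemma Qinv_Q k lb ub w : 0 < k -> lb <= w <= ub -> Qinv k lb ub (Q k w) = w.
Proof.
  intros Hk Hw. assert (lb < ub \/ lb = ub) as [Hlu|Hlu] by lra.
  - destruct (Qinv_spec k lb ub (Q k w) Hk Hlu) as [_ H].
    { split; [destruct (Req_dec lb w); [subst; lra| apply Rlt_le, Q_incr; lra]|].
      destruct (Req_dec w ub); [subst; lra| apply Rlt_le, Q_incr; lra]. }
    apply Q_inj with k; auto.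
  - unfold Qinv. assert (Hex : exists w', lb <= w' <= ub /\ Q k w' = Q k w) by (exists w; split; auto).
    destruct (epsilon_spec (inhabits 0) _ Hex) as [H1 _]. lra.
Qed.

Lemma Qinv_deriv k lb ub y : 0 < k -> lb < ub -> Q k lb < y < Q k ub ->
  derivable_pt_lim (Qinv k lb ub) y (/ dQ k (Qinv k lb ub y)).
Proof.
  intros Hk Hlu Hy.
  set (g := Qinv k lb ub).
  assert (Hinc : forall x y, lb <= x -> x < y -> y <= ub -> Q k x < Q k y)
    by (intros; apply Q_incr; auto).
  assert (Hfg : forall x, Q k lb <= x -> x <= Q k ub -> comp (Q k) g x = id x).
  { intros x H1 H2. unfold comp, id, g. apply Qinv_spec; auto. }
  assert (Hgw : forall x, Q k lb <= x -> x <= Q k ub -> lb <= g x <= ub).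
  { intros x H1 H2. apply Qinv_spec; auto. }
  assert (Prf : forall a, g (Q k lb) <= a <= g (Q k ub) -> derivable_pt (Q k) a).
  { intros a _. exists (dQ k a). apply Q_deriv; auto. }
  assert (Prg : continuity_pt g y).
  { apply (continuity_pt_recip_interv (Q k) g lb ub Hlu Hinc Hfg Hgw). 
    - intros; apply Q_cont; auto.
    - auto. }
  assert (HQlu : Q k lb < Q k ub) by (apply Q_incr; auto).
  assert (Prg_incr : g (Q k lb) <= g y <= g (Q k ub)).
  { unfold g. rewrite !Qinv_Q; try lra; auto. apply Qinv_spec; auto; lra. }
  pose proof (derivable_pt_lim_recip_interv (Q k) g (Q k lb) (Q k ub) y Prf Prg HQlu Hy Prg_incr) as H.
  assert (Hd : derive_pt (Q k) (g y) (Prf (g y) Prg_incr) = dQ k (g y)).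
  { apply derive_pt_eq_0. apply Q_deriv; auto. }
  rewrite Hd in H. replace (/ dQ k (g y)) with (1 / dQ k (g y)) by (unfold Rdiv; ring).
  apply H.
  - intros x Hx. apply Hfg; lra.
  - pose proof (dQ_pos k (g y) Hk). lra.
Qed.

Lemma decr_before (f : R -> R) T l : 0 < T -> derivable_pt_lim f T l -> 0 < l ->
  exists t, 0 < t < T /\ f t < f T.
Proof.
  intros HT Hd Hl. destruct (Hd l Hl) as [del Hdel].
  set (hh := - Rmin (del/2) (T/2)).
  assert (Hm1 : Rmin (del/2) (T/2) <= del/2) by apply Rmin_l.
  assert (Hm2 : Rmin (del/2) (T/2) <= T/2) by apply Rmin_r.
  assert (Hm3 : 0 < Rmin (del/2) (T/2)) by (apply Rmin_pos; pose proof (cond_pos del); lra).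
  assert (Hh0 : hh <> 0) by (unfold hh; lra).
  assert (Hha : Rabs hh < del) by (unfold hh; rewrite Rabs_Ropp, Rabs_right; pose proof (cond_pos del); lra).
  specialize (Hdel hh Hh0 Hha).
  exists (T + hh). split; [unfold hh; lra|].
  apply Rabs_def2 in Hdel. destruct Hdel as [_ H2].
  assert (Hq : 0 < (f (T + hh) - f T) / hh) by lra.
  assert (hh < 0) by (unfold hh; lra).
  assert (f (T + hh) - f T < 0).
  { replace (f (T + hh) - f T) with ((f (T + hh) - f T) / hh * hh) by (field; lra). nra. }
  lra.
Qed.

Lemma deriv_cont (f : R -> R) t l : derivable_pt_lim f t l -> continuity_pt f t.
Proof. intros H. apply derivable_continuous_pt. exists l. exact H. Qed.

Lemma is_derive_D (f : R -> R) t l : derivable_pt_lim f t l -> Derive (fun y => f y) t = l.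
Proof. intros H. apply is_derive_unique. apply is_derive_Reals. exact H. Qed.

Lemma hit_unique xA xB vA T : 0 < xB < xA -> vA^2 < 2/xA -> IsHitTime xA vA xB T ->
  let k := 2/xA - vA^2 in
  T = (Q k vA + Q k (sqrt (2/xB - k))) / (k * sqrt k).
Proof.
  intros HB Hv [HT [x [v [Hx0 [Hv0 [HxT [Hd Hne]]]]]]] k.
  assert (Hk : 0 < k) by (unfold k; lra).
  assert (Hsk : 0 < sqrt k) by (apply sqrt_lt_R0; lra).
  assert (HE : forall t, 0 <= t <= T -> v t ^2 / 2 - / x t = vA^2/2 - / xA).
  { intros t Ht. destruct (Req_dec t 0) as [->|Ht0]; [rewrite Hx0, Hv0; auto|].
    destruct (MVT_cor2 (fun t => v t ^2 / 2 - / x t) (fun _ => 0) 0 t) as [c [Hc Hc2]]; [lra| |].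
    - intros c Hc. destruct (Hd c ltac:(lra)) as [Hxc [Hdx Hdv]].
      apply is_derive_Reals. auto_derive.
      + refine (conj _ (conj _ (conj _ I))).
        * exists (- / x c ^2); apply is_derive_Reals; auto.
        * exists (v c); apply is_derive_Reals; auto.
        * lra.
      + rewrite (is_derive_D _ _ _ Hdx), (is_derive_D _ _ _ Hdv). field. lra.
    - rewrite <- Hx0, <- Hv0. lra. }
  assert (Hx : forall t, 0 <= t <= T -> x t = 2 / (k + v t ^2)).
  { intros t Ht. pose proof (HE t Ht) as E. destruct (Hd t Ht) as [Hxt _].
    assert (0 < k + v t ^2) by nra.
    assert (Hi : / x t = (k + v t ^2)/2) by (unfold k; unfold Rdiv in *; lra).
    rewrite <- (Rinv_inv (x t)), Hi. field. lra. }
  assert (HQ : Q k (v T) - Q k vA = - (k * sqrt k) * T).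
  { destruct (MVT_cor2 (fun t => Q k (v t)) (fun _ => - (k * sqrt k)) 0 T) as [c [Hc _]]; [lra| |].
    - intros c Hc. destruct (Hd c Hc) as [Hxc [Hdx Hdv]].
      pose proof (Hx c Hc) as Hxc'.
      replace (- (k * sqrt k)) with (dQ k (v c) * (- / x c ^2)).
      + apply (derivable_pt_lim_comp v (Q k)); auto. apply Q_deriv; auto.
      + rewrite Hxc'. unfold dQ. assert (0 < k + v c ^2) by nra. field. lra.
    - rewrite Hv0 in Hc. lra. }
  assert (HvT2 : v T ^2 = 2/xB - k).
  { pose proof (HE T ltac:(lra)) as E. rewrite HxT in E. unfold k. 
    apply Rmult_eq_reg_l with (/2); [|lra]. unfold Rdiv in *. lra. }
  assert (Hpos : 0 < 2/xB - k).
  { unfold k. assert (2/xA < 2/xB). { apply Rmult_lt_compat_l; [lra|]. apply Rinv_lt_contravar; nra. } nra. }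
  assert (HvTneg : v T < 0).
  { destruct (Rlt_or_le (v T) 0) as [h|h]; auto. exfalso.
    assert (0 < v T) by (destruct h; auto; rewrite <- H in HvT2; simpl in HvT2; lra).
    destruct (Hd T ltac:(lra)) as [_ [HdxT _]].
    destruct (decr_before x T (v T) HT HdxT H) as [t1 [Ht1 Hxt1]].
    destruct (IVT_interv (fun t => xB - x t) 0 t1) as [z [Hz Hz2]].
    - intros a Ha. apply continuity_pt_minus; [apply continuity_pt_const; intros ? ?; auto|].
      destruct (Hd a ltac:(lra)) as [_ [Hda _]]. eapply deriv_cont; eauto.
    - lra.
    - rewrite Hx0; lra.
    - rewrite HxT in Hxt1. lra.
    - apply (Hne z); lra. }
  assert (HvT : v T = - sqrt (2/xB - k)).
  { rewrite <- HvT2. replace (v T ^2) with ((- v T)^2) by ring.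
    rewrite sqrt_pow2 by lra. ring. }
  rewrite HvT, Q_odd in HQ. field_simplify_eq; [|lra]. nra.
Qed.

Lemma Q_le k x y : 0 < k -> x <= y -> Q k x <= Q k y.
Proof. intros Hk [H|H]; [apply Rlt_le, Q_incr; auto| subst; lra]. Qed.

Lemma hit_exists xA xB vA : 0 < xB < xA -> vA^2 < 2/xA ->
  let k := 2/xA - vA^2 in
  IsHitTime xA vA xB ((Q k vA + Q k (sqrt (2/xB - k))) / (k * sqrt k)).
Proof.
  intros HB Hv k.
  assert (Hk : 0 < k) by (unfold k; lra).
  assert (Hsk : 0 < sqrt k) by (apply sqrt_lt_R0; lra).
  assert (Hsk2 : sqrt k * sqrt k = k) by (apply sqrt_sqrt; lra).
  assert (Hpos : 0 < 2/xB - k).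
  { unfold k. assert (2/xA < 2/xB). { apply Rmult_lt_compat_l; [lra|]. apply Rinv_lt_contravar; nra. } nra. }
  assert (Hab : 2/xA < 2/xB). { apply Rmult_lt_compat_l; [lra|]. apply Rinv_lt_contravar; nra. }
  set (s := sqrt (2/xB - k)).
  assert (Hs : 0 < s) by (apply sqrt_lt_R0; lra).
  assert (Hs2 : s * s = 2/xB - k) by (apply sqrt_sqrt; lra).
  assert (HvA : - s < vA < s).
  { assert (vA * vA < s * s) by (rewrite Hs2; unfold k; nra). split; nra. }
  set (c := k * sqrt k).
  assert (Hc : 0 < c) by (unfold c; nra).
  set (lb := - s - 1). set (ub := s + 1).
  assert (Hlu : lb < ub) by (unfold lb, ub; lra).
  set (T := (Q k vA + Q k s) / c).
  set (w := fun t => Qinv k lb ub (Q k vA - c * t)).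
  assert (HQ : Q k (-s) < Q k vA) by (apply Q_incr; lra).
  rewrite Q_odd in HQ.
  assert (HT : 0 < T) by (unfold T; apply Rdiv_lt_0_compat; lra).
  assert (Hy : forall t, 0 <= t <= T -> Q k lb < Q k vA - c * t < Q k ub).
  { intros t Ht. assert (c * t <= c * T) by (apply Rmult_le_compat_l; lra).
    assert (c * T = Q k vA + Q k s) by (unfold T; field; lra).
    assert (0 <= c * t) by nra.
    pose proof (Q_incr k lb (-s) Hk ltac:(unfold lb; lra)). rewrite Q_odd in H2.
    pose proof (Q_incr k vA ub Hk ltac:(unfold ub; lra)). lra. }
  assert (Hw : forall t, 0 <= t <= T -> lb <= w t <= ub /\ Q k (w t) = Q k vA - c * t).
  { intros t Ht. apply Qinv_spec; auto. pose proof (Hy t Ht); lra. }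
  assert (Hwd : forall t, 0 <= t <= T -> derivable_pt_lim w t (- (k + w t ^2)^2 / 4)).
  { intros t Ht.
    replace (- (k + w t ^2)^2 / 4) with (/ dQ k (w t) * (- c)).
    - unfold w. apply (derivable_pt_lim_comp (fun t => Q k vA - c * t) (Qinv k lb ub) t (- c)).
      + apply is_derive_Reals. auto_derive; auto. ring.
      + apply Qinv_deriv; auto.
    - unfold dQ, c. assert (0 < k + w t ^2) by nra. field. lra. }
  assert (Hw0 : w 0 = vA).
  { unfold w. rewrite Rmult_0_r, Rminus_0_r. apply Qinv_Q; auto. unfold lb, ub; lra. }
  assert (HwT : w T = - s).
  { unfold w. replace (Q k vA - c * T) with (Q k (-s)).
    - apply Qinv_Q; auto. unfold lb, ub; lra.
    - rewrite Q_odd. unfold T. field. lra. }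
  split; [exact HT|].
  exists (fun t => 2 / (k + w t ^2)), w.
  split; [|split; [|split; [|split]]].
  - rewrite Hw0. unfold k. field. split; lra.
  - exact Hw0.
  - rewrite HwT. replace ((-s)^2) with (s*s) by ring. rewrite Hs2. field. lra.
  - intros t Ht. pose proof (Hwd t Ht) as Hd.
    assert (0 < k + w t ^2) by nra.
    split; [apply Rdiv_lt_0_compat; lra|]. split.
    + apply is_derive_Reals. auto_derive.
      * split; [exists (- (k + w t ^2)^2 / 4); apply is_derive_Reals; auto|]. split; [lra|auto].
      * rewrite (is_derive_D _ _ _ Hd). field. lra.
    + replace (- / (2 / (k + w t ^ 2)) ^ 2) with (- (k + w t ^2)^2 / 4) by (field; lra). exact Hd.
  - intros t Ht. destruct (Hw t ltac:(lra)) as [Hlb HQw].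
    assert (Hgt : - s < w t).
    { destruct (Rlt_or_le (-s) (w t)) as [h|h]; auto. exfalso.
      pose proof (Q_le k _ _ Hk h). rewrite Q_odd in H.
      assert (c * t < c * T) by (apply Rmult_lt_compat_l; lra).
      assert (c * T = Q k vA + Q k s) by (unfold T; field; lra). lra. }
    assert (Hle : w t <= vA).
    { destruct (Rle_or_lt (w t) vA) as [h|h]; auto. exfalso.
      pose proof (Q_incr k _ _ Hk h). assert (0 <= c * t) by nra. lra. }
    intro E. assert (w t * w t < s * s) by nra.
    assert (k + w t ^2 < 2 / xB) by nra.
    assert (0 < k + w t ^2) by nra.
    assert (2 / (k + w t ^2) > xB).
    { apply Rmult_lt_reg_r with (k + w t ^2); auto. unfold Rdiv. rewrite Rmult_assoc, Rinv_l by lra.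
      replace (2 * /xB) with (2/xB) in * by reflexivity.
      assert (xB * (2/xB) = 2) by (field; lra). nra. }
    lra.
Qed.

Definition T1 (K0 v : R) := 2 * atan (v / sqrt (K0 - v^2)) / sqrt (K0 - v^2) ^ 3
   + 2 * v / (K0 * sqrt (K0 - v^2) ^ 2).
Definition T1d (K0 v : R) := 2 / sqrt (K0 - v^2) ^ 4
   + 6 * v * atan (v / sqrt (K0 - v^2)) / sqrt (K0 - v^2) ^ 5
   + 2 / (K0 * sqrt (K0 - v^2) ^ 2) + 4 * v^2 / (K0 * sqrt (K0 - v^2) ^ 4).
Definition g (K0 a u : R) := 2 * atan (sqrt (u + (a - K0)) / sqrt (K0 - u)) / sqrt (K0 - u) ^ 3
   + 2 * sqrt (u + (a - K0)) / (a * sqrt (K0 - u) ^ 2).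
Definition G (K0 a u : R) := 1 / (sqrt (u + (a - K0)) * sqrt (K0 - u) ^ 4)
   + 3 * atan (sqrt (u + (a - K0)) / sqrt (K0 - u)) / sqrt (K0 - u) ^ 5
   + 1 / (a * sqrt (u + (a - K0)) * sqrt (K0 - u) ^ 2)
   + 2 * sqrt (u + (a - K0)) / (a * sqrt (K0 - u) ^ 4).

Ltac side := repeat match goal with |- _ /\ _ => split end; try exact I; try lra;
  try (repeat apply Rmult_integral_contrapositive_currified; lra); try (intro; nra).

Lemma T1_deriv K0 v : v^2 < K0 -> is_derive (T1 K0) v (T1d K0 v).
Proof.
  intros Hv. unfold T1, T1d.
  assert (Hr : 0 < sqrt (K0 - v^2)) by (apply sqrt_lt_R0; lra).
  assert (HK0 : 0 < K0) by nra.
  auto_derive;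
  replace (K0 + - (v * (v * 1))) with (K0 - v^2) by ring;
  set (r := sqrt (K0 - v^2)) in *.
  { side. }
  assert (E : K0 = r * r + v * v) by (unfold r; rewrite sqrt_sqrt; lra).
  rewrite E. unfold Rdiv. field. side.
Qed.

Lemma g_deriv K0 a u : 0 < u + (a - K0) -> u < K0 -> 0 < a -> is_derive (g K0 a) u (G K0 a u).
Proof.
  intros Hs Hr0 Ha. unfold g, G.
  assert (Hr : 0 < sqrt (K0 - u)) by (apply sqrt_lt_R0; lra).
  assert (Hsg : 0 < sqrt (u + (a - K0))) by (apply sqrt_lt_R0; lra).
  auto_derive;
  replace (K0 + - u) with (K0 - u) by ring;
  set (r := sqrt (K0 - u)) in *; set (sg := sqrt (u + (a - K0))) in *.
  { side. }
  assert (Ea : a = sg * sg + r * r) by (unfold sg, r; rewrite !sqrt_sqrt; lra).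
  assert (EK : K0 = r * r + u) by (unfold r; rewrite sqrt_sqrt; lra).
  rewrite Ea; try rewrite EK. unfold Rdiv. field. side.
Qed.

Definition Tfun K0 a v := T1 K0 v + g K0 a (v^2).
Definition d1 K0 a v := T1d K0 v + 2 * v * G K0 a (v^2).

Lemma Tfun_deriv K0 a v : K0 < a -> v^2 < K0 -> is_derive (Tfun K0 a) v (d1 K0 a v).
Proof.
  intros Ha Hv.
  assert (H1 := T1_deriv K0 v Hv).
  assert (Hsq : is_derive (fun v : R => v^2) v (2 * v)) by (auto_derive; try ring; auto).
  assert (Hg := g_deriv K0 a (v^2) ltac:(nra) Hv ltac:(nra)).
  assert (H2 := is_derive_comp (g K0 a) (fun v => v^2) v _ _ Hg Hsq).
  pose proof (is_derive_plus _ _ _ _ _ H1 H2) as H.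
  unfold Tfun, d1. 
  replace (T1d K0 v + 2 * v * G K0 a (v ^ 2)) with (plus (T1d K0 v) (scal (2 * v) (G K0 a (v ^ 2)))).
  - exact H.
  - unfold plus, scal; simpl. unfold mult; simpl. ring.
Qed.

Lemma TDR_Tfun xA xB v : 0 < xB < xA -> v^2 < 2/xA -> TDR xA xB v = Tfun (2/xA) (2/xB) v.
Proof.
  intros HB Hv.
  assert (Hex := hit_exists xA xB v HB Hv). simpl in Hex.
  assert (HT : IsHitTime xA v xB (TDR xA xB v)).
  { unfold TDR. apply epsilon_spec. eexists; exact Hex. }
  rewrite (hit_unique xA xB v _ HB Hv HT).
  unfold Tfun, T1, g, Q.
  replace (v^2 + (2/xB - 2/xA)) with (2/xB - (2/xA - v^2)) by ring.
  assert (Hab : 2/xA < 2/xB). { apply Rmult_lt_compat_l; [lra|]. apply Rinv_lt_contravar; nra. }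
  assert (Hr : 0 < sqrt (2/xA - v^2)) by (apply sqrt_lt_R0; lra).
  assert (Hs : 0 < sqrt (2/xB - (2/xA - v^2))) by (apply sqrt_lt_R0; nra).
  set (r := sqrt (2/xA - v^2)) in *. set (sg := sqrt (2/xB - (2/xA - v^2))) in *.
  assert (EA : 2/xA = r*r + v*v) by (unfold r; rewrite sqrt_sqrt; lra).
  assert (EB : 2/xB = sg*sg + r*r) by (unfold sg, r; rewrite !sqrt_sqrt; nra).
  rewrite EB, EA. unfold Rdiv. field. side.
Qed.

Lemma even_deriv0 (f : R -> R) l : (forall v, f (-v) = f v) -> is_derive f 0 l -> l = 0.
Proof.
  intros Hev Hd.
  assert (Hd' : is_derive f (- 0) l) by (rewrite Ropp_0; exact Hd).
  assert (Hn : is_derive (fun v : R => - v) 0 (-1)) by (auto_derive; try ring; auto).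
  pose proof (is_derive_comp f (fun v => - v) 0 _ _ Hd' Hn) as H.
  apply is_derive_ext with (g := f) in H; [|intros; apply Hev].
  apply is_derive_unique in H. apply is_derive_unique in Hd.
  rewrite Hd in H. unfold scal in H; simpl in H; unfold mult in H; simpl in H. lra.
Qed.

Lemma T1d_even K0 v : T1d K0 (-v) = T1d K0 v.
Proof.
  unfold T1d. replace ((-v)^2) with (v^2) by ring.
  replace (- v / sqrt (K0 - v^2)) with (- (v / sqrt (K0 - v^2))) by (unfold Rdiv; ring).
  rewrite atan_opp. unfold Rdiv. ring.
Qed.

Lemma T1d_ex K0 : 0 < K0 -> ex_derive (T1d K0) 0.
Proof.
  intros HK. unfold T1d.
  assert (Hr : 0 < sqrt (K0 - 0^2)) by (apply sqrt_lt_R0; simpl; lra).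
  auto_derive. replace (K0 + - (0 * (0 * 1))) with (K0 - 0^2) by ring. side.
Qed.

Lemma G_ex K0 a : 0 < K0 < a -> ex_derive (G K0 a) 0.
Proof.
  intros HK. unfold G.
  assert (Hr : 0 < sqrt (K0 - 0)) by (apply sqrt_lt_R0; lra).
  assert (Hs : 0 < sqrt (0 + (a - K0))) by (apply sqrt_lt_R0; lra).
  auto_derive. replace (K0 + - 0) with (K0 - 0) by ring. side.
Qed.

Lemma d1_deriv0 K0 a : 0 < K0 < a -> is_derive (d1 K0 a) 0 (2 * G K0 a 0).
Proof.
  intros HK.
  destruct (T1d_ex K0 ltac:(lra)) as [l Hl].
  assert (l = 0) by (apply (even_deriv0 (T1d K0)); auto; apply T1d_even). subst l.
  assert (H2 : is_derive (fun v => 2 * v * G K0 a (v^2)) 0 (2 * G K0 a 0)).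
  { destruct (G_ex K0 a HK) as [m Hm].
    auto_derive.
    - replace (0 * (0 * 1)) with 0 by ring. exists m; exact Hm.
    - replace (0 * (0 * 1)) with 0 by ring. ring. }
  pose proof (is_derive_plus _ _ _ _ _ Hl H2) as H.
  unfold d1. replace (2 * G K0 a 0) with (plus 0 (2 * G K0 a 0)) by (unfold plus; simpl; ring).
  exact H.
Qed.

Lemma G0_bound K0 a : 0 < K0 < a -> 1 / (sqrt (a - K0) * K0^2) < G K0 a 0.
Proof.
  intros HK. unfold G.
  replace (0 + (a - K0)) with (a - K0) by ring. replace (K0 - 0) with K0 by ring.
  assert (Hr : 0 < sqrt K0) by (apply sqrt_lt_R0; lra).
  assert (Hs : 0 < sqrt (a - K0)) by (apply sqrt_lt_R0; lra).
  assert (Hr2 : sqrt K0 * sqrt K0 = K0) by (apply sqrt_sqrt; lra).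
  assert (E4 : sqrt K0 ^ 4 = K0^2) by (replace (sqrt K0 ^4) with ((sqrt K0 * sqrt K0)^2) by ring; rewrite Hr2; ring).
  rewrite E4.
  assert (Ha : 0 < atan (sqrt (a - K0) / sqrt K0)).
  { rewrite <- atan_0. apply atan_increasing. apply Rdiv_lt_0_compat; auto. }
  assert (0 < 3 * atan (sqrt (a - K0) / sqrt K0) / sqrt K0 ^ 5)
    by (apply Rdiv_lt_0_compat; [lra| apply pow_lt; auto]).
  assert (0 < 1 / (a * sqrt (a - K0) * sqrt K0 ^ 2))
    by (apply Rdiv_lt_0_compat; [lra| apply Rmult_lt_0_compat; [nra| apply pow_lt; auto]]).
  assert (0 < 2 * sqrt (a - K0) / (a * K0 ^ 2))
    by (apply Rdiv_lt_0_compat; [lra| apply Rmult_lt_0_compat; [lra| apply pow_lt; lra]]).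
  lra.
Qed.

Theorem mainTheorem12 (xA : R) (hxA : 0 < xA) :
  forall M : R, exists delta : R, 0 < delta /\
    forall xB : R, xA - delta < xB < xA -> 0 < xB ->
      exists (d1 : R -> R) (d2 : R),
        (forall vA, Rabs vA < sqrt (2 / xA) ->
           derivable_pt_lim (TDR xA xB) vA (d1 vA)) /\
        derivable_pt_lim d1 0 d2 /\
        M < d2.
Proof.
  intros M.
  assert (HK0 : 0 < 2 / xA) by (apply Rdiv_lt_0_compat; lra).
  set (K0 := 2 / xA) in *.
  assert (HM : 0 < Rabs M + 1) by (pose proof (Rabs_pos M); lra).
  set (r0 := 1 / (K0^2 * (Rabs M + 1))).
  assert (Hr0 : 0 < r0) by (unfold r0; apply Rdiv_lt_0_compat; [lra| apply Rmult_lt_0_compat; [apply pow_lt|]; lra]).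
  exists (Rmin (xA/2) (r0^2 * xA^2 / 4)).
  assert (Hm1 := Rmin_l (xA/2) (r0^2 * xA^2 / 4)).
  assert (Hm2 := Rmin_r (xA/2) (r0^2 * xA^2 / 4)).
  split.
  { apply Rmin_pos; [lra|]. apply Rdiv_lt_0_compat; [|lra]. apply Rmult_lt_0_compat; apply pow_lt; lra. }
  intros xB HxB HxB0.
  assert (HB : 0 < xB < xA) by lra.
  assert (Hab : K0 < 2 / xB). { apply Rmult_lt_compat_l; [lra|]. apply Rinv_lt_contravar; nra. }
  set (a := 2 / xB) in *.
  exists (d1 K0 a), (2 * G K0 a 0). split; [|split].
  - intros vA HvA.
    assert (Hsq : sqrt K0 * sqrt K0 = K0) by (apply sqrt_sqrt; lra).
    assert (Hv2 : vA^2 < K0).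
    { rewrite <- (pow2_abs vA). pose proof (Rabs_pos vA). nra. }
    apply is_derive_Reals.
    apply is_derive_ext_loc with (f := Tfun K0 a).
    + exists (mkposreal (sqrt K0 - Rabs vA) ltac:(lra)).
      intros y Hy. change R in y. change (Rabs (y - vA) < sqrt K0 - Rabs vA) in Hy.
      assert (Hy2 : Rabs y < sqrt K0).
      { pose proof (Rabs_triang (y - vA) vA). replace (y - vA + vA) with y in H by ring. lra. }
      symmetry. apply TDR_Tfun; auto.
      rewrite <- (pow2_abs y). pose proof (Rabs_pos y). fold K0. nra.
    + apply Tfun_deriv; auto.
  - apply is_derive_Reals. apply d1_deriv0. lra.
  - pose proof (G0_bound K0 a ltac:(lra)) as HG.
    set (h := a - K0) in *.
    assert (Hh : 0 < h) by (unfold h; lra).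
    assert (Hhe : h * (xA * xB) = 2 * (xA - xB)) by (unfold h, a, K0; field; lra).
    assert (Hhr : h < r0^2).
    { assert (xA - xB < r0^2 * xA^2/4) by lra.
      assert (xA * xB > xA^2/2) by nra.
      assert (h * (xA * xB) < r0^2 * (xA * xB)) by nra.
      assert (0 < xA * xB) by nra. nra. }
    assert (Hsh : sqrt h < r0).
    { rewrite <- (sqrt_pow2 r0) by lra. apply sqrt_lt_1_alt. lra. }
    assert (Hsh0 : 0 < sqrt h) by (apply sqrt_lt_R0; lra).
    assert (HK2 : 0 < K0^2) by (apply pow_lt; lra).
    assert (Hb : Rabs M + 1 < 1 / (sqrt h * K0^2)).
    { assert (sqrt h * K0^2 < r0 * K0^2) by nra.
      assert (r0 * K0^2 = / (Rabs M + 1)) by (unfold r0; field; lra).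
      unfold Rdiv. rewrite Rmult_1_l.
      replace (Rabs M + 1) with (/ / (Rabs M + 1)) by (field; lra).
      apply Rinv_lt_contravar; [|lra].
      apply Rmult_lt_0_compat; [nra| apply Rinv_0_lt_compat; lra]. }
    pose proof (Rle_abs M). lra.
Qed.
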